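(* In the inexact augmented Lagrangian method described in the context, for every $t\ge1$, writing $\bar d(\lambda_t):=\mathcal{L}^\beta(x_{t+1},\lambda_t)$ and $g_t:=Ax_{t+1}-b$: (a) $d(\lambda)\le\bar d(\lambda_t)+\langle g_t,\lambda-\lambda_t\rangle$ for all $\lambda\in\mathbb{R}^m$; (b) $d(\lambda_{t+1})\ge\bar d(\lambda_t)+\frac{\beta}{4}\|g_t\|^2-2\epsilon_t$.
   Context: Problem: $\min_{x\in\mathcal{X}}f(x)$ s.t. $Ax=b$, with $f:\mathbb{R}^n\to\mathbb{R}$ convex and differentiable, $\mathcal{X}\subseteq\mathbb{R}^n$ nonempty, closed, bounded and convex, $A\in\mathbb{R}^{m\times n}$, $b\in\mathbb{R}^m$. Augmented Lagrangian $\mathcal{L}^\beta(x,\lambda)=f(x)+\langle\lambda,Ax-b\rangle+\frac{\beta}{2}\|Ax-b\|^2$, $\beta>0$; dual function $d(\lambda)=\min_{x\in\mathcal{X}}\mathcal{L}^\beta(x,\lambda)$; Euclidean norms. Method: given $x_1\in\mathcal{X}$, $\lambda_1$, nonnegative $(\epsilon_t)$, for $t\ge1$ choose $x_{t+1}\in\mathcal{X}$ with $\mathcal{L}^\beta(x_{t+1},\lambda_t)-d(\lambda_t)\le\epsilon_t$ and set $\lambda_{t+1}=\lambda_t+\frac{\beta}{2}(Ax_{t+1}-b)$. *)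

(* Defs.v *)
From HB Require Import structures.
From mathcomp Require Import all_boot all_order all_algebra.
From mathcomp Require Import all_classical all_reals all_analysis.
Set Implicit Arguments. Unset Strict Implicit. Unset Printing Implicit Defensive.
Import Order.TTheory GRing.Theory Num.Theory.
Local Open Scope classical_set_scope.
Local Open Scope ring_scope.

Definition dotv {R : realType} {k : nat} (u v : 'cV[R]_k) : R :=
  \sum_(i < k) u i 0 * v i 0.
Definition enorm {R : realType} {k : nat} (u : 'cV[R]_k) : R :=
  Num.sqrt (dotv u u).

Definition auglag {R : realType} {n m : nat} (f : 'cV[R]_n -> R)
  (A : 'M[R]_(m, n)) (b : 'cV[R]_m) (beta : R) (x : 'cV[R]_n) (lam : 'cV[R]_m) : R :=
  f x + dotv lam (A *m x - b) + beta / 2 * (enorm (A *m x - b)) ^+ 2.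

(* Dual function d(lambda) = min_{x in X} L^beta(x, lambda), written as an infimum
   (the minimum is attained since X is compact and L continuous). *)
Definition dualfun {R : realType} {n m : nat} (f : 'cV[R]_n -> R)
  (A : 'M[R]_(m, n)) (b : 'cV[R]_m) (beta : R) (X : set 'cV[R]_n) (lam : 'cV[R]_m) : R :=
  inf [set auglag f A b beta x lam | x in X].

(* Main.v *)
Require Import Defs.
From HB Require Import structures.
From mathcomp Require Import all_boot all_order all_algebra.
From mathcomp Require Import all_classical all_reals all_analysis.
From mathcomp Require Import ring lra.
Import Order.TTheory GRing.Theory Num.Theory numFieldNormedType.Exports.
Local Open Scope classical_set_scope.
Local Open Scope ring_scope.
Lemma trmx_norm_le (R : realType) p q (x : 'M[R]_(p,q)) : `|x^T| <= `|x|.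
Proof.
have h0 : 0 <= mx_norm x := normr_ge0 x.
change (mx_norm x^T <= mx_norm x).
rewrite !mx_normrE in h0 *.
apply/bigmax_leP; split => // -[i j] _ /=; rewrite mxE.
exact: (le_bigmax _ (fun ij : 'I_p * 'I_q => `|x ij.1 ij.2|) (j, i)).
Qed.
Lemma trmx_cont (R : realType) p q : continuous (fun x : 'M[R]_(p,q) => x^T).
Proof.
move=> x. apply/(@cvgrPdist_lt _ _ _ (nbhs x) (nbhs_filter x)) => e e0.
have := (@cvg_id _ (nbhs x)). move/(@cvgrPdist_lt _ _ _ (nbhs x) (nbhs_filter x))/(_ e e0).
apply: filterS => y /= h. rewrite -linearB /=. exact: (le_lt_trans (@trmx_norm_le R p q (x - y)) h).
Qed.

Lemma f_lb (R : realType) n (f : 'cV[R]_n -> R) (X : set 'cV[R]_n) :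
  (forall z : 'M[R]_(n, 1), differentiable (f : 'M[R]_(n, 1) -> R^o) z) ->
  closed X -> bounded_set X -> exists c, forall x, X x -> c <= f x.
Proof.
move=> fd Xcl Xbd.
pose Y := (fun y : 'rV[R]_n => y^T) @^-1` X.
have Ycl : closed Y.
  apply: closed_comp => // y _; exact: trmx_cont.
have Ybd : bounded_set Y.
  move: Xbd => [M [Mr HM]]; exists M; split => // r Mr' y Yy.
  have h1 := HM _ Mr' _ Yy. have h2 := @trmx_norm_le R n 1 (y^T). rewrite trmxK in h2. exact: le_trans h2 h1.
have Yco : compact Y by apply: bounded_closed_compact.
pose g := fun y : 'rV[R]_n => (f y^T : R^o).
have gc : continuous g.
  move=> y; apply: continuous_comp; first exact: trmx_cont.
  exact: differentiable_continuous.
have gco : compact (g @` Y).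
  apply: continuous_compact => //; exact: continuous_subspaceT.
have [M [_ HM]] := compact_bounded gco.
exists (- (M + 1)) => x Xx.
have : `|g x^T| <= M + 1.
  apply: HM; first by rewrite ltrDl.
  exists x^T => //; by rewrite /Y /= trmxK.
rewrite /g trmxK ler_norml => /andP[] //.
Qed.

Section dot.
Context {R : realType} {k : nat}.
Implicit Types u v w : 'cV[R]_k.
Lemma dotvC u v : dotv u v = dotv v u.
Proof. by apply: eq_bigr => i _; rewrite mulrC. Qed.
Lemma dotvDl u v w : dotv (u + v) w = dotv u w + dotv v w.
Proof. by rewrite /dotv -big_split; apply: eq_bigr => i _; rewrite mxE mulrDl. Qed.
Lemma dotvZl a u w : dotv (a *: u) w = a * dotv u w.
Proof. by rewrite /dotv mulr_sumr; apply: eq_bigr => i _; rewrite mxE mulrA. Qed.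
Lemma dotvNl u w : dotv (- u) w = - dotv u w.
Proof. by rewrite -scaleN1r dotvZl mulN1r. Qed.
Lemma dotvBl u v w : dotv (u - v) w = dotv u w - dotv v w.
Proof. by rewrite dotvDl dotvNl. Qed.
Lemma dotvDr u v w : dotv w (u + v) = dotv w u + dotv w v.
Proof. by rewrite !(dotvC w) dotvDl. Qed.
Lemma dotvZr a u w : dotv w (a *: u) = a * dotv w u.
Proof. by rewrite !(dotvC w) dotvZl. Qed.
Lemma dotvBr u v w : dotv w (u - v) = dotv w u - dotv w v.
Proof. by rewrite !(dotvC w) dotvBl. Qed.
Lemma dotv_ge0 u : 0 <= dotv u u.
Proof. by apply: sumr_ge0 => i _; rewrite -expr2 sqr_ge0. Qed.
Lemma enorm_sq u : enorm u ^+ 2 = dotv u u.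
Proof. by rewrite /enorm sqr_sqrtr // dotv_ge0. Qed.
End dot.

Lemma auglag_lb (R : realType) n m (f : 'cV[R]_n -> R) (A : 'M[R]_(m, n)) b beta z l :
  0 < beta ->
  f z - dotv l l / (2 * beta) <= auglag f A b beta z l.
Proof.
move=> b0; rewrite /auglag enorm_sq.
set g := A *m z - b.
have h := dotv_ge0 (l + beta *: g).
rewrite !dotvDl !dotvDr !dotvZl !dotvZr (dotvC g l) in h.
set a := dotv l l in h *; set bb := dotv l g in h *; set cc := dotv g g in h *.
have e : (a + beta * bb + (beta * bb + beta * (beta * cc))) / (2 * beta) =
   a / (2 * beta) + bb + beta / 2 * cc.
  field. by rewrite gt_eqF.
have : 0 <= (a + beta * bb + (beta * bb + beta * (beta * cc))) / (2 * beta).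
  by apply: divr_ge0 => //; rewrite mulr_ge0 // ltW.
rewrite e. lra.
Qed.

Local Open Scope convex_scope.
Lemma halfP (R : realType) : Itv.spec (@Itv.num_sem R) (Itv.Real `[0%Z, 1%Z]) (2^-1 : R).
Proof. rewrite /= /Itv.num_sem /=. apply/andP; split.
 - done.
 - rewrite /= in_itv /=. apply/andP; split. by rewrite invr_ge0. by rewrite invf_le1 // ler1n. Qed.
Definition half (R : realType) : {i01 R} := Itv.Def (halfP R).
Local Close Scope convex_scope.

Theorem lemma9 (R : realType) (n m : nat) (f : 'cV[R]_n -> R)
  (X : set 'cV[R]_n) (A : 'M[R]_(m, n)) (b : 'cV[R]_m) (beta : R)
  (x : nat -> 'cV[R]_n) (lam : nat -> 'cV[R]_m) (eps : nat -> R) :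
  convex_function (setT : set (convex_lmodType 'cV[R]_n)) f ->
  (forall z : 'M[R]_(n, 1), differentiable (f : 'M[R]_(n, 1) -> R^o) z) ->
  X !=set0 -> closed X -> bounded_set X ->
  convex_set (X : set (convex_lmodType 'cV[R]_n)) ->
  0 < beta ->
  (forall t, 0 <= eps t) ->
  X (x 1%N) ->
  (forall t : nat, (1 <= t)%N ->
     X (x t.+1) /\
     auglag f A b beta (x t.+1) (lam t) - dualfun f A b beta X (lam t) <= eps t /\
     lam t.+1 = lam t + (beta / 2) *: (A *m x t.+1 - b)) ->
  forall t : nat, (1 <= t)%N ->
    (forall l : 'cV[R]_m,
       dualfun f A b beta X l <=
       auglag f A b beta (x t.+1) (lam t) + dotv (A *m x t.+1 - b) (l - lam t)) /\
    dualfun f A b beta X (lam t.+1) >=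
       auglag f A b beta (x t.+1) (lam t) + beta / 4 * (enorm (A *m x t.+1 - b)) ^+ 2
       - 2 * eps t.
Proof.
move=> fcvx fd X0 Xcl Xbd Xcvx b0 eps0 X1 Hit t t1.
have [c Hc] := @f_lb R n f X fd Xcl Xbd.
have hlb : forall l, has_lbound [set auglag f A b beta z l | z in X].
  move=> l; exists (c - dotv l l / (2 * beta)) => _ [z Xz <-].
  apply: le_trans (@auglag_lb R n m f A b beta z l b0); by rewrite lerD2r Hc.
have dle : forall l z, X z -> dualfun f A b beta X l <= auglag f A b beta z l.
  move=> l z Xz; apply: (ge_inf (hlb l)); by exists z.
have [Xx [Heps Hlam]] := Hit t t1.
set xs := x t.+1 in Xx Heps Hlam *.
set g := A *m xs - b in Hlam *.
split.
  move=> l; apply: le_trans (dle l xs Xx) _.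
  rewrite /auglag -/g dotvBr (dotvC g l) (dotvC g (lam t)).
  by rewrite le_eqVlt; apply/orP; left; apply/eqP; ring.
apply: lb_le_inf.
  by case: X0 => z Xz; exists (auglag f A b beta z (lam t.+1)); exists z.
move=> _ [z Xz <-].
pose y : 'cV[R]_n := 2^-1 *: xs + (1 - 2^-1) *: z.
have Xy : X y.
  have := Xcvx xs z (half R) (mem_set Xx) (mem_set Xz).
  by rewrite inE.
have Hfy : f y <= 2^-1 * f xs + (1 - 2^-1) * f z.
  exact: (fcvx (half R) xs z (mem_set I) (mem_set I)).
have Hd := dle (lam t) y Xy.
set u := A *m z - b.
have Ey : A *m y - b = 2^-1 *: g + 2^-1 *: u.
  rewrite /y /g /u mulmxDr -!scalemxAr.
  have -> : (1 - 2^-1 : R) = 2^-1 by field.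
  rewrite !scalerBr. set P := A *m xs. set Q := A *m z.
  have hb : b = 2^-1 *: b + 2^-1 *: b.
    by rewrite -scalerDl -{1}[b]scale1r; congr (_ *: _); field.
  rewrite {1}hb opprD !addrA; congr (_ + _); by rewrite addrAC.
have h12 : (1 - 2^-1 : R) = 2^-1 by field.
rewrite h12 in Hfy.
move: Hd Heps Hfy.
rewrite /auglag Ey Hlam -/g -/u. clearbody g u. rewrite !enorm_sq.
rewrite !dotvDl !dotvDr !dotvZl !dotvZr (dotvC u g).
have := eps0 t. have := dotv_ge0 u.
set fxs := f xs; set fz := f z; set fy := f y.
set lg := dotv (lam t) g; set lu := dotv (lam t) u; set gg := dotv g g;
  set uu := dotv u u; set gu := dotv g u; set d := dualfun _ _ _ _ _ _.
move=> uu0 e0 Hd Heps Hfy.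
have buu : 0 <= beta * uu by rewrite mulr_ge0 // ltW.
lra.
Qed.
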